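(* Let $(\Sigma_A,T)$ be a topologically mixing one-sided subshift of finite type, $\Psi=\{\psi_n\}_{n\ge1}\in\mathcal F^-(\Sigma_A,T)$, $Q(s)=P(s\Psi)$, equip $\Sigma_A$ with the metric $d_\Psi$, and let $\mu_{\max}$ be the Gibbs measure of the zero potential (the measure of maximal entropy). Then for every $x\in\Sigma_A$, $\underline d_{\mu_{\max}}(x)=-\dfrac{Q(0)}{\liminf_{n\to\infty}\frac1n\psi_n(x)}$ and $\overline d_{\mu_{\max}}(x)=-\dfrac{Q(0)}{\limsup_{n\to\infty}\frac1n\psi_n(x)}$.
   Context: A sequence $\Phi=\{\phi_n\}_{n\ge1}$ of continuous functions on $\Sigma_A$ is almost additive if $|\phi_{n+m}(x)-\phi_n(x)-\phi_m(T^nx)|\le C$; bounded variation if $\sup\{|\phi_n(x)-\phi_n(y)|:x|_n=y|_n\}\le C'$ for all $n$; negative if there is $c>0$ with $\phi_n(x)\le-cn$ and $n\mapsto\phi_n(x)$ decreasing. $\mathcal F^-(\Sigma_A,T)$: negative almost additive potentials with bounded variation. Pressure: $P(\Phi)=\lim_n\frac1n\log\sum_{|w|=n}\exp(\sup_{x\in[w]}\phi_n(x))$. Weak Gibbs metric: $d_\Psi(x,y)=\sup_{z\in[x\wedge y]}\exp(\psi_{|x\wedge y|}(z))$, where $x\wedge y$ is the longest common prefix and $\psi_0:=0$. The measure $\mu_{\max}$ satisfies $\mu_{\max}([x|_n])\asymp\exp(-nQ(0))$ uniformly, with $Q(0)=h_{top}(T)$. Local dimensions: $\underline d_\mu(x)=\liminf_{r\to0}\frac{\log\mu(B(x,r))}{\log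 r}$, $\overline d_\mu(x)=\limsup_{r\to0}\frac{\log\mu(B(x,r))}{\log r}$, balls with respect to $d_\Psi$. *)

(* Defs.v *)
From HB Require Import structures.
From mathcomp Require Import all_boot all_order all_algebra.
From mathcomp Require Import all_classical all_reals all_analysis.
Set Implicit Arguments. Unset Strict Implicit. Unset Printing Implicit Defensive.
Import Order.TTheory GRing.Theory Num.Theory numFieldNormedType.Exports.
Local Open Scope classical_set_scope.
Local Open Scope ring_scope.

HB.instance Definition _ (k : nat) := isPointed.Build 'I_k.+1 ord0.

Section Symbolic.
Variables (k : nat) (A : 'I_k.+1 -> 'I_k.+1 -> bool).

Definition seqs := nat -> 'I_k.+1.

Definition SigmaA : set seqs := [set x | forall n, A (x n) (x n.+1)].

Definition shift (x : seqs) : seqs := fun n => x n.+1.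

Definition agree (m : nat) (x y : seqs) := forall i, (i < m)%N -> x i = y i.

Definition cyl (x : seqs) (m : nat) : set seqs := [set z | SigmaA z /\ agree m z x].

Definition wcyl n (w : n.-tuple 'I_k.+1) : set seqs :=
  [set z | SigmaA z /\ forall i : 'I_n, z i = tnth w i].

(* topological mixing of (Sigma_A, T), tested on the basis of cylinder sets *)
Definition topologically_mixing : Prop :=
  forall (x y : seqs) (m : nat), SigmaA x -> SigmaA y ->
    exists N, forall n, (N <= n)%N ->
      exists z, SigmaA z /\ agree m z x /\ agree m (iter n shift z) y.

Variable R : realType.

(* continuity of f : Sigma_A -> R for the product topology *)
Definition cont_on_SigmaA (f : seqs -> R) : Prop :=
  forall x, SigmaA x -> forall e : R, 0 < e ->
    exists m, forall y, SigmaA y -> agree m y x -> `|f y - f x| < e.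

(* sequences of potentials phi_n, n >= 1 (the value at index 0 is unused) *)
Definition almost_additive (phi : nat -> seqs -> R) : Prop :=
  exists C : R, forall n m, (0 < n)%N -> (0 < m)%N -> forall x, SigmaA x ->
    `|phi (n + m)%N x - phi n x - phi m (iter n shift x)| <= C.

Definition bounded_variation (phi : nat -> seqs -> R) : Prop :=
  exists C' : R, forall n, (0 < n)%N -> forall x y, SigmaA x -> SigmaA y ->
    agree n x y -> `|phi n x - phi n y| <= C'.

Definition negative_pot (phi : nat -> seqs -> R) : Prop :=
  exists c : R, 0 < c /\
    (forall n, (0 < n)%N -> forall x, SigmaA x -> phi n x <= - c * n%:R) /\
    (forall n, (0 < n)%N -> forall x, SigmaA x -> phi n.+1 x <= phi n x).

Definition in_Fminus (phi : nat -> seqs -> R) : Prop :=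
  (forall n, (0 < n)%N -> cont_on_SigmaA (phi n)) /\
  almost_additive phi /\ bounded_variation phi /\ negative_pot phi.

Definition pressure (phi : nat -> seqs -> R) : R :=
  limn ((fun n : nat =>
    ln (\sum_(w : n.-tuple 'I_k.+1 | `[< wcyl w !=set0 >])
          expR (sup [set phi n x | x in wcyl w])) / n%:R) : R^nat).

Definition psi0 (psi : nat -> seqs -> R) (m : nat) (z : seqs) : R :=
  if m == 0%N then 0 else psi m z.

Definition dPsi (psi : nat -> seqs -> R) (x y : seqs) : R :=
  match pselect (exists n, x n != y n) with
  | left h => let m := ex_minn h in sup [set expR (psi0 psi m z) | z in cyl x m]
  | right _ => 0
  end.

Definition dball (psi : nat -> seqs -> R) (x : seqs) (r : R) : set seqs :=
  [set y | SigmaA y /\ dPsi psi x y < r].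

(* sets generating the Borel sigma-algebra of the shift space: cylinders *)
Definition cylinders : set (set seqs) :=
  [set C | exists (m : nat) (w : seqs), C = [set z | agree m z w]].

Definition shspace := @g_sigma_algebraType (nat -> 'I_k.+1) cylinders.

(* lower/upper local dimensions w.r.t. balls of d_Psi:
   liminf_{r->0} = sup_{delta>0} inf_{0<r<delta}, limsup dually *)
Definition lower_locdim (mu : set shspace -> \bar R) (psi : nat -> seqs -> R)
    (x : seqs) : \bar R :=
  ereal_sup [set ereal_inf [set (ln (fine (mu (dball psi x r))) / ln r)%:E
                           | r in `]0, delta[ ] | delta in `]0, +oo[ ].

Definition upper_locdim (mu : set shspace -> \bar R) (psi : nat -> seqs -> R)
    (x : seqs) : \bar R :=
  ereal_inf [set ereal_sup [set (ln (fine (mu (dball psi x r))) / ln r)%:E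
                           | r in `]0, delta[ ] | delta in `]0, +oo[ ].

(* mu is the Gibbs measure for the zero potential (the measure of maximal
   entropy): a T-invariant probability on Sigma_A with
   mu([x|n]) asymp exp(-n P(0)) uniformly *)
Definition is_mu_max (mu : {measure set shspace -> \bar R}) : Prop :=
  mu [set: shspace] = 1%E /\ mu (~` SigmaA) = 0%E /\
  (forall E : set shspace, measurable E -> mu (shift @^-1` E) = mu E) /\
  exists C : R, 0 < C /\ forall x, SigmaA x -> forall n : nat,
    ((C^-1)%:E <= mu (cyl x n) * (expR (n%:R * pressure (fun _ _ => 0)))%:E
    <= C%:E)%E.

End Symbolic.

(* Main.v *)
Require Import Defs.
From HB Require Import structures.
From mathcomp Require Import all_boot all_order all_algebra.
From mathcomp Require Import all_classical all_reals all_analysis.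
From mathcomp Require Import lra ring zify.
Import Order.TTheory GRing.Theory Num.Theory numFieldNormedType.Exports.
Local Open Scope classical_set_scope.
Local Open Scope ring_scope.

Lemma le_ln_of {R : realType} {y r : R} : 0 < r -> expR y <= r -> y <= ln r.
Proof. by move=> r0 h; rewrite -ler_expR lnK // posrE. Qed.

Lemma ln_le_of {R : realType} {y r : R} : 0 < r -> r <= expR y -> ln r <= y.
Proof. by move=> r0 h; rewrite -ler_expR lnK // posrE. Qed.

Lemma lt_ln_of {R : realType} {y r : R} : 0 < r -> expR y < r -> y < ln r.
Proof. by move=> r0 h; rewrite -ltr_expR lnK // posrE. Qed.
Lemma pressure0_ge0 (R : realType) (k : nat) (A : 'I_k.+1 -> 'I_k.+1 -> bool)
  (x : seqs k) : SigmaA A x -> 0 <= pressure A (fun _ _ => (0:R)).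
Proof.
move=> Sx; rewrite /pressure.
set u := (fun n : nat => _).
case: (pselect (cvgn u)) => cu; last by rewrite dvgP.
apply: limr_ge => //; apply: nearW => n.
rewrite /u; apply: divr_ge0; last exact: ler0n.
apply: ln_ge0.
pose w0 : n.-tuple 'I_k.+1 := [tuple x (nat_of_ord i) | i < n].
have w0x : wcyl A w0 x by split => // i; rewrite tnth_mktuple.
have w0ne : `[< wcyl A w0 !=set0 >] by apply/asboolP; exists x.
rewrite (bigD1 w0) //=.
have -> : [set (0:R) | _ in wcyl A w0] = [set 0].
  by apply/seteqP; split => [r [z _ <-] //|r ->]; exists x.
rewrite sup1 expR0 lerDl; apply: sumr_ge0 => w _; exact/ltW/expR_gt0.
Qed.

Lemma mono_eps (R : realType) (P c : R) : 0 <= P -> 0 < c ->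
  forall e, 0 < e -> exists2 eta, 0 < eta & forall s t, s <= -c -> t <= -c ->
    s - eta <= t -> P / (- s) - e <= P / (- t).
Proof.
move=> P0 c0 e e0.
have P1 : 0 < P + 1 by lra.
exists (e * c ^+ 2 / (P + 1)).
  by apply: divr_gt0 => //; apply: mulr_gt0 => //; apply: exprn_gt0.
move=> s t hs ht hst.
set X := - s; set Y := - t.
have X0 : 0 < X by rewrite /X; lra.
have Y0 : 0 < Y by rewrite /Y; lra.
have YX : Y - X <= e * c ^+ 2 / (P + 1) by rewrite /X /Y; lra.
have h1 : P * (e * c ^+ 2 / (P + 1)) <= e * c ^+ 2.
  rewrite mulrA ler_pdivrMr // mulrC ler_pM2l; [lra|]; exact: mulr_gt0 (exprn_gt0 _ c0).
have h2 : P * (Y - X) <= e * (X * Y).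
  have : P * (Y - X) <= P * (e * c ^+ 2 / (P + 1)) by apply: ler_wpM2l.
  have : c ^+ 2 <= X * Y by rewrite expr2; apply: ler_pM; rewrite /X /Y; lra.
  move=> h3 h4; apply: (le_trans h4); apply: (le_trans h1); apply: ler_wpM2l; lra.
have -> : P / X - e = P / Y - (e - P * (Y - X) / (X * Y)).
  by field; apply/andP; split; apply/lt0r_neq0.
rewrite lerBlDr lerDl subr_ge0 ler_pdivrMr //; exact: mulr_gt0.
Qed.

Lemma my_approx (R : realType) (c K T Phi P e : R) : 0 < c -> 0 <= T -> 0 <= P ->
  0 < e -> 0 <= K -> 0 <= Phi ->
  exists N : nat, forall (M : nat) (beta num D : R), (N <= M)%N ->
    c <= beta -> beta <= K -> M%:R * beta - T <= D -> D <= M%:R * beta ->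
    `|num - M%:R * P| <= Phi -> `|num / D - P / beta| <= e.
Proof.
move=> c0 T0 P0 e0 K0 Phi0.
set W := Phi * K + P * T.
have W0 : 0 <= W by rewrite /W; apply: addr_ge0; apply: mulr_ge0.
exists (Num.Def.trunc ((T + W / (c * e)) / c)).+1.
move=> M beta num D NM cb bK hD1 hD2 hnum.
have ce0 : 0 < c * e by apply: mulr_gt0.
have hM : (T + W / (c * e)) / c < M%:R.
  apply: (lt_le_trans (truncnS_gt _)); rewrite ler_nat //.
have hM2 : W < (M%:R * c - T) * (c * e).
  have hM1 : T + W / (c * e) < M%:R * c by rewrite -ltr_pdivrMr.
  have hW : W / (c * e) < M%:R * c - T by lra.
  by rewrite -ltr_pdivrMr.
have M0 : 0 <= M%:R :> R by exact: ler0n.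
have Mcb : M%:R * c <= M%:R * beta by apply: ler_wpM2l.
have D0 : 0 < D.
  have : 0 <= W / (c * e) by apply: divr_ge0 => //; exact: ltW.
  move: hM; rewrite ltr_pdivrMr //; lra.
have b0 : 0 < beta by lra.
have Db0 : 0 < D * beta by apply: mulr_gt0.
have -> : num / D - P / beta = ((num - M%:R * P) * beta + P * (M%:R * beta - D)) / (D * beta).
  by field; apply/andP; split; apply/lt0r_neq0.
rewrite normrM normfV (gtr0_norm Db0) ler_pdivrMr //.
apply: (le_trans (ler_normD _ _)).
rewrite !normrM (gtr0_norm b0) (ger0_norm P0) (@ger0_norm _ (_ - D)); last lra.
have h1 : `|num - M%:R * P| * beta <= Phi * K.
  by apply: ler_pM; [exact: normr_ge0|lra|done|done].
have h2 : P * (M%:R * beta - D) <= P * T by apply: ler_wpM2l => //; lra.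
have h3 : (M%:R * c - T) * c <= D * beta.
  apply: ler_pM; [|exact: ltW|lra|done].
  move: hM2; have : 0 <= (M%:R * c - T) * (c * e) -> 0 <= M%:R * c - T.
    by move=> h; rewrite -(pmulr_lge0 _ ce0).
  move=> h h'; apply: h; apply: le_trans (ltW h'); done.
have : e * ((M%:R * c - T) * c) <= e * (D * beta) by apply: ler_wpM2l => //; exact: ltW.
have : W <= e * ((M%:R * c - T) * c).
  have -> : e * ((M%:R * c - T) * c) = (M%:R * c - T) * (c * e) by ring.
  exact: ltW.
rewrite /W; lra.
Qed.

Lemma liminf_props (R : realType) (u : R^o^nat) (lo hi : R) :
  (forall n, lo <= u n <= hi) ->
  (forall eta, 0 < eta -> exists N, forall n, (N <= n)%N -> limn_inf u - eta <= u n) /\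
  (forall eta, 0 < eta -> forall N, exists2 n, (N <= n)%N & u n <= limn_inf u + eta).
Proof.
move=> hb.
have ub : has_ubound (range u) by exists hi => _ [n _ <-]; case/andP: (hb n).
have lb : has_lbound (range u) by exists lo => _ [n _ <-]; case/andP: (hb n).
have -> : limn_inf u = sup (range (infs u)).
  by apply/cvg_lim => //; apply: cvg_infs_sup.
have lbs : forall N, has_lbound (sdrop u N) by exact: has_lbound_sdrop.
have infs_le : forall N n, (N <= n)%N -> infs u N <= u n.
  by move=> N n Nn; rewrite /infs /=; apply: ge_inf => //; exists n.
have hs : has_sup (range (infs u)).
  split; first by exists (infs u 0%N); exists 0%N.
  by exists hi => _ [n _ <-]; apply: (le_trans (infs_le n n (leqnn n))); case/andP: (hb n).
split.
  move=> eta eta0; have [_ [N _ <-] hN] := sup_adherent eta0 hs.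
  by exists N => n Nn; apply: (le_trans (ltW hN)); exact: infs_le.
move=> eta eta0 N.
have hi' : has_inf (sdrop u N) by split => //; exists (u N); exists N => /=.
have [_ [n /= Nn <-] hn] := inf_adherent eta0 hi'.
exists n => //; apply: (le_trans (ltW hn)); rewrite lerD2r.
by apply: ub_le_sup; [case: hs|exists N].
Qed.

Lemma limsup_props (R : realType) (u : R^o^nat) (lo hi : R) :
  (forall n, lo <= u n <= hi) ->
  (forall eta, 0 < eta -> exists N, forall n, (N <= n)%N -> u n <= limn_sup u + eta) /\
  (forall eta, 0 < eta -> forall N, exists2 n, (N <= n)%N & limn_sup u - eta <= u n).
Proof.
move=> hb.
have ub : has_ubound (range u) by exists hi => _ [n _ <-]; case/andP: (hb n).
have lb : has_lbound (range u) by exists lo => _ [n _ <-]; case/andP: (hb n).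
have -> : limn_sup u = inf (range (sups u)).
  by apply/cvg_lim => //; apply: cvg_sups_inf.
have ubs : forall N, has_ubound (sdrop u N) by exact: has_ubound_sdrop.
have sups_ge : forall N n, (N <= n)%N -> u n <= sups u N.
  by move=> N n Nn; rewrite /sups /=; apply: ub_le_sup => //; exists n.
have hs : has_inf (range (sups u)).
  split; first by exists (sups u 0%N); exists 0%N.
  by exists lo => _ [n _ <-]; apply: (le_trans _ (sups_ge n n (leqnn n))); case/andP: (hb n).
split.
  move=> eta eta0; have [_ [N _ <-] hN] := inf_adherent eta0 hs.
  by exists N => n Nn; apply: (le_trans _ (ltW hN)); exact: sups_ge.
move=> eta eta0 N.
have hs' : has_sup (sdrop u N) by split => //; exists (u N); exists N => /=.
have [_ [n /= Nn <-] hn] := sup_adherent eta0 hs'.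
exists n => //; apply: (le_trans _ (ltW hn)); rewrite lerD2r.
by apply: ge_inf; [case: hs|exists N].
Qed.

Theorem lemma2p5 (R : realType) (k : nat) (A : 'I_k.+1 -> 'I_k.+1 -> bool)
    (psi : nat -> seqs k -> R) (mu : {measure set (shspace k) -> \bar R}) :
  topologically_mixing A ->
  in_Fminus A psi ->
  is_mu_max A mu ->
  let Q := fun s : R => pressure A (fun n x => s * psi n x) in
  forall x : seqs k, SigmaA A x ->
    lower_locdim A mu psi x =
      (- Q 0 / limn_inf (fun n : nat => psi n x / n%:R))%:E /\
    upper_locdim A mu psi x =
      (- Q 0 / limn_sup (fun n : nat => psi n x / n%:R))%:E.
Proof.
move=> _ [_ [[C HC] [[C' HC'] [c [c0 [Hneg Hdec]]]]]] [_ [_ [_ [Cm [Cm0 Hmu]]]]] Q x Sx.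
pose P := pressure A (fun _ _ => (0:R)).
have QP : Q 0 = P.
  by rewrite /Q /P; congr (pressure A _); apply/funext => n; apply/funext => z; rewrite mul0r.
rewrite QP.
have P0 : 0 <= P by exact: (@pressure0_ge0 R k A x Sx).
have Hmu' : forall M, ((Cm^-1)%:E <= mu (cyl A x M) * (expR (M%:R * P))%:E <= Cm%:E)%E.
  by move=> M; exact: Hmu x Sx M.
clear QP Q Hmu; clearbody P.
have Siter : forall n z, SigmaA A z -> SigmaA A (iter n (@Defs.shift k) z).
  elim => [//|n IH] z Sz; rewrite iterS => i; exact: (IH z Sz i.+1).
have agree_refl : forall m (z : seqs k), agree m z z by move=> m z i _.
have C0 : 0 <= C by apply: le_trans (HC 1%N 1%N erefl erefl x Sx); exact: normr_ge0.
have C'0 : 0 <= C' by apply: le_trans (HC' 1%N erefl x x Sx Sx (agree_refl _ _)); exact: normr_ge0.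
have [L HL] : exists L, forall y, SigmaA A y -> L <= psi 1%N y.
  have : forall s : 'I_k.+1, exists L : R, forall y, SigmaA A y -> y 0%N = s -> L <= psi 1%N y.
    move=> s; case: (pselect (exists y, SigmaA A y /\ y 0%N = s)) => [[y0 [Sy0 hy0]]|hn].
      exists (psi 1%N y0 - C') => y Sy hy.
      have : agree 1 y y0 by move=> i; rewrite ltnS leqn0 => /eqP ->; rewrite hy hy0.
      move/(HC' 1%N erefl y y0 Sy Sy0); rewrite ler_norml => /andP[h1 h2]; lra.
    exists 0 => y Sy hy; exfalso; apply: hn; exists y; exact: (conj Sy hy).
  move/choice => [f hf]; exists (- \sum_s `|f s|) => y Sy.
  apply: le_trans (hf (y 0%N) y Sy erefl).
  rewrite (bigD1 (y 0%N)) /=; last exact: isT.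
  have := ler_norm (- f (y 0%N)); rewrite normrN.
  have : 0 <= \sum_(i | i != y 0%N) `|f i| by apply: sumr_ge0 => i _; exact: normr_ge0.
  lra.
have hA1 : forall n, (0 < n)%N -> psi n x <= - c * n%:R by move=> n n0; exact: Hneg.
have hA3 : forall n, (0 < n)%N -> psi n x + L - C <= psi n.+1 x.
  move=> n n0; have := HC n 1%N n0 erefl x Sx; rewrite addn1 ler_norml => /andP[h1 h2].
  have := HL _ (Siter n x Sx); lra.
have hA4 : forall m n, (0 < m)%N -> (0 < n)%N -> psi (m + n)%N x <= psi m x - c * n%:R + C.
  move=> m n m0 n0; have := HC m n m0 n0 x Sx; rewrite ler_norml => /andP[h1 h2].
  have := Hneg n n0 _ (Siter m x Sx); lra.
have Lc : L <= - c by have := HL x Sx; have := hA1 1%N erefl; rewrite mulr1; lra.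
have hA5 : forall n, (0 < n)%N -> (L - C) * n%:R <= psi n x.
  elim => [//|n IH] _; case: (posnP n) => [->|n0].
    by rewrite mulr1; have := HL x Sx; lra.
  have := IH n0; have := hA3 n n0; rewrite -addn1 natrD mulrDr mulr1; lra.
have [d dE] : exists d : nat -> R, forall m, d m = sup [set expR (psi0 psi m z) | z in cyl A x m].
  by exists (fun m => sup [set expR (psi0 psi m z) | z in cyl A x m]).
have hxcyl : forall m, cyl A x m x by move=> m; split.
have psi0E : forall m z, (0 < m)%N -> psi0 psi m z = psi m z.
  by move=> m z m0; rewrite /psi0; case: eqP => // m00; move: m0; rewrite m00.
have hSub : forall m z, cyl A x m z -> expR (psi0 psi m z) <= expR (psi0 psi m x + C').
  move=> m z [Sz az]; rewrite ler_expR; case: (posnP m) => [->|m0].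
    by rewrite /psi0 /=; lra.
  rewrite !psi0E //; have := HC' m m0 z x Sz Sx az; rewrite ler_norml => /andP[h1 h2]; lra.
have hdhas : forall m, has_sup [set expR (psi0 psi m z) | z in cyl A x m].
  move=> m; split; first by exists (expR (psi0 psi m x)); exists x.
  by exists (expR (psi0 psi m x + C')) => _ [z hz <-]; exact: hSub.
have hd_ub : forall m z, cyl A x m z -> expR (psi0 psi m z) <= d m.
  by move=> m z hz; rewrite dE; apply: ub_le_sup; [case: (hdhas m)|exists z].
have hd_le : forall m, d m <= expR (psi0 psi m x + C').
  move=> m; rewrite dE; apply: ge_sup; first by exists (expR (psi0 psi m x)); exists x.
  by move=> _ [z hz <-]; exact: hSub.
have hd_ge : forall m, expR (psi0 psi m x) <= d m by move=> m; exact: hd_ub.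
have hd0 : d 0%N = 1.
  apply/eqP; rewrite eq_le; apply/andP; split; last by have := hd_ge 0%N; rewrite /psi0 /= expR0.
  rewrite dE; apply: ge_sup; first by exists (expR (psi0 psi 0 x)); exists x.
  by move=> _ [z hz <-]; rewrite /psi0 /= expR0.
have hd_step : forall m, d m.+1 <= d m.
  move=> m; rewrite (dE m.+1); apply: ge_sup; first by exists (expR (psi0 psi m.+1 x)); exists x.
  move=> _ [z [Sz az] <-]; rewrite psi0E //; case: (posnP m) => [->|m0].
    rewrite hd0 -expR0 ler_expR; have := Hneg 1%N erefl z Sz; have := mulr_gt0 c0 (ltr01 : (0:R) < 1); lra.
  apply: le_trans (hd_ub m z _); last by split; [exact: Sz|move=> i im; apply: az; exact: ltnW].
  by rewrite psi0E // ler_expR; exact: Hdec.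
have hd_mono : forall m n, (m <= n)%N -> d n <= d m.
  move=> m n /subnK <-; elim: (n - m)%N => [|j IH]; first by rewrite add0n.
  by rewrite addSn; exact: le_trans (hd_step _) IH.
have hd_pos : forall m, 0 < d m by move=> m; exact: lt_le_trans (expR_gt0 _) (hd_ge m).
have hd_a : forall m, (0 < m)%N -> expR (psi m x) <= d m /\ d m <= expR (psi m x + C').
  move=> m m0; rewrite -(psi0E m x m0); split; [exact: hd_ge|exact: hd_le].
have hd_small : forall del, 0 < del -> exists N, forall M, (N <= M)%N -> d M < del.
  move=> del del0; exists (Num.Def.trunc ((C' - ln del) / c)).+1 => M NM.
  have M0 : (0 < M)%N by apply: leq_trans NM.
  have hM : (C' - ln del) / c < M%:R.
    by apply: (lt_le_trans (truncnS_gt _)); rewrite ler_nat.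
  move: hM; rewrite ltr_pdivrMr; last exact: c0.
  move=> hM.
  apply: (le_lt_trans (proj2 (hd_a M M0))).
  have edel : expR (ln del) = del by apply: lnK; rewrite posrE.
  rewrite -[X in _ < X]edel ltr_expR.
  have := hA1 M M0; lra.
have hball : forall r, 0 < r -> exists M, dball A psi x r = cyl A x M /\ d M < r /\
    (forall m, (m < M)%N -> r <= d m).
  move=> r r0.
  have ex : exists m, d m < r by have [N hN] := hd_small r r0; exists N; exact: hN.
  case: (ex_minnP ex) => M hM hmin.
  have hmin' : forall m, (m < M)%N -> r <= d m.
    move=> m mM; rewrite leNgt; apply/negP => /hmin; rewrite leqNgt mM; exact: notF.
  exists M; split; last by split.
  apply/seteqP; split => y [Sy hy]; split; [exact: Sy| |exact: Sy|].
  - move: hy; rewrite /dPsi; case: pselect => [h|hn] /=.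
      case: ex_minnP => m hm hminm; rewrite -dE => /hmin Mm i iM.
      case: (eqVneq (x i) (y i)) => [e|/hminm mi]; first by rewrite e.
      have : (m < M)%N by apply: leq_ltn_trans mi iM.
      by rewrite ltnNge Mm.
    move=> _ i _; case: (eqVneq (x i) (y i)) => [e|ne]; first by rewrite e.
    by exfalso; apply: hn; exists i.
  - rewrite /dPsi; case: (pselect (exists n, x n != y n)) => [h|hn] /=; last exact: r0.
    case: ex_minnP => m hm hminm; rewrite -dE.
    have Mm : (M <= m)%N.
      rewrite leqNgt; apply/negP => mM; move: hm; rewrite (hy m mM) eqxx; exact: notF.
    exact: le_lt_trans (hd_mono _ _ Mm) hM.
have hmuM : forall M, exists v, mu (cyl A x M) = v%:E /\ 0 < v /\
    `|- ln v - M%:R * P| <= ln Cm.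
  move=> M; move: (measure_ge0 mu (cyl A x M)) (Hmu' M).
  case: (mu (cyl A x M)) => [v| |] h0 /andP[h1 h2].
  - exists v; split; first reflexivity.
    rewrite -EFinM !lee_fin in h1 h2.
    have E0 := expR_gt0 (M%:R * P).
    have Cmi0 : 0 < Cm^-1 by rewrite invr_gt0.
    have v0 : 0 < v by have := lt_le_trans Cmi0 h1; rewrite (pmulr_lgt0 _ E0).
    split; first exact: v0.
    have vE0 : 0 < v * expR (M%:R * P) by exact: mulr_gt0 v0 E0.
    have l1 : ln Cm^-1 <= ln (v * expR (M%:R * P)).
      by rewrite ler_ln; [exact: h1|rewrite posrE; exact: Cmi0|rewrite posrE; exact: vE0].
    have l2 : ln (v * expR (M%:R * P)) <= ln Cm.
      by rewrite ler_ln; [exact: h2|rewrite posrE; exact: vE0|rewrite posrE; exact: Cm0].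
    move: l1 l2; rewrite lnM; [|rewrite posrE; exact: v0|rewrite posrE; exact: E0].
    rewrite expRK lnV; last by rewrite posrE; exact: Cm0.
    move=> l1 l2; rewrite ler_norml; apply/andP; split; lra.
  - exfalso; move: h2; rewrite gt0_mulye; last by rewrite lte_fin; exact: expR_gt0.
    by rewrite leye_eq => /eqP.
  - exfalso; move: h1; rewrite gt0_mulNye; last by rewrite lte_fin; exact: expR_gt0.
    by rewrite leeNy_eq => /eqP.
have lnCm0 : 0 <= ln Cm.
  by have [v [_ [_ hv]]] := hmuM 0%N; exact: le_trans (normr_ge0 _) hv.
have [u uE] : exists u : nat -> R, forall n, u n = psi n x / n%:R.
  by exists (fun n => psi n x / n%:R).
have ufun : (fun n : nat => psi n x / n%:R) = u by apply/funext => n; rewrite uE.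
rewrite ufun.
have hu_le : forall n, (0 < n)%N -> u n <= - c.
  move=> n n0; rewrite uE ler_pdivrMr; last by rewrite ltr0n.
  exact: hA1 n n0.
have hu_ge : forall n, L - C <= u n.
  move=> n; case: (posnP n) => [->|n0].
    by rewrite uE invr0 mulr0; lra.
  rewrite uE ler_pdivlMr; last by rewrite ltr0n.
  exact: hA5 n n0.
have hu_b : forall n, L - C <= u n <= 0.
  move=> n; apply/andP; split; first exact: hu_ge.
  case: (posnP n) => [->|n0]; first by rewrite uE invr0 mulr0.
  have := hu_le n n0; lra.
have hMb : forall M, (0 < M)%N -> M%:R * (- u M) = - psi M x.
  move=> M M0; rewrite uE; field; rewrite pnatr_eq0; apply/eqP => e; move: M0; rewrite e; exact: notF.
have [G GE] : exists G : R -> R, forall r, G r = ln (fine (mu (dball A psi x r))) / ln r.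
  by exists (fun r => ln (fine (mu (dball A psi x r))) / ln r).
have K0 : 0 <= C - L by lra.
have E1 : forall e, 0 < e -> forall N0, exists2 del, 0 < del & forall r, 0 < r -> r < del ->
    exists2 M, (N0 <= M)%N & `|G r - P / (- u M)| <= e.
  move=> e e0 N0.
  have T0 : 0 <= C + C' - L by lra.
  have [N1 hN1] := @my_approx R c (C - L) (C + C' - L) (ln Cm) P e c0 T0 P0 e0 K0 lnCm0.
  pose N := maxn (maxn N0 N1) 2.
  exists (d N); first exact: hd_pos N.
  move=> r r0 rN; have [M [hb [hdM hmin]]] := hball r r0.
  have NM : (N < M)%N.
    rewrite ltnNge; apply/negP => MN; have := hd_mono _ _ MN; lra.
  have M0 : (0 < M)%N by clear -NM; lia.
  exists M; first by clear -NM; lia.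
  have [v [hv [v0 hnum]]] := hmuM M.
  rewrite GE hb hv /=.
  have -> : ln v / ln r = (- ln v) / (- ln r) by rewrite invrN mulrNN.
  have eM : M = M.-1.+1 by rewrite (prednK M0).
  have M10 : (0 < M.-1)%N by clear -NM; lia.
  apply: (hN1 M (- u M)); first by clear -NM; lia.
  - have := hu_le M M0; lra.
  - have := hu_ge M; lra.
  - rewrite hMb; last exact: M0.
    have l1 : ln r <= psi M.-1 x + C'.
      apply: ln_le_of r0 (le_trans (hmin _ _) (proj2 (hd_a _ M10))); clear -NM; lia.
    have := hA3 M.-1 M10; rewrite -eM; lra.
  - rewrite hMb; last exact: M0.
    have := le_ln_of r0 (le_trans (proj1 (hd_a M M0)) (ltW hdM)); lra.
  - exact: hnum.
have E3 : forall e, 0 < e -> exists N, forall M, (N <= M)%N -> `|G (d M) - P / (- u M)| <= e.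
  move=> e e0.
  pose G0 := (Num.Def.trunc ((C + C') / c)).+1.
  have hG0 : C + C' < c * G0%:R.
    rewrite mulrC -ltr_pdivrMr; last exact: c0.
    exact: truncnS_gt.
  have G00 : (0 < G0)%N by [].
  have Phi0 : 0 <= ln Cm + G0%:R * P by apply: addr_ge0; [exact: lnCm0|apply: mulr_ge0; [exact: ler0n|exact: P0]].
  have [N1 hN1] := @my_approx R c (C - L) C' (ln Cm + G0%:R * P) P e c0 C'0 P0 e0 K0 Phi0.
  exists (maxn N1 1) => M NM.
  have M0 : (0 < M)%N by clear -NM; lia.
  have [M' [hb [hdM hmin]]] := hball (d M) (hd_pos M).
  have MM' : (M < M')%N.
    rewrite ltnNge; apply/negP => M'M; have := hd_mono _ _ M'M; lra.
  have M'G : (M' <= M + G0)%N.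
    rewrite leqNgt; apply/negP => h; have h1 := hmin _ h.
    have MG0 : (0 < M + G0)%N by clear -M0; lia.
    have h2 := proj2 (hd_a _ MG0).
    have h3 := proj1 (hd_a _ M0).
    have : expR (psi M x) <= expR (psi (M + G0)%N x + C') by apply: le_trans h3 (le_trans h1 h2).
    rewrite ler_expR => h4.
    have := hA4 M G0 M0 G00; lra.
  have [v [hv [v0 hnum]]] := hmuM M'.
  rewrite GE hb hv /=.
  have -> : ln v / ln (d M) = (- ln v) / (- ln (d M)) by rewrite invrN mulrNN.
  apply: (hN1 M (- u M)); first by clear -NM; lia.
  - have := hu_le M M0; lra.
  - have := hu_ge M; lra.
  - rewrite hMb; last exact: M0.
    have := ln_le_of (hd_pos M) (proj2 (hd_a M M0)); lra.
  - rewrite hMb; last exact: M0.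
    have := le_ln_of (hd_pos M) (proj1 (hd_a M M0)); lra.
  - have l1 : M%:R <= M'%:R :> R by rewrite ler_nat; clear -MM'; lia.
    have l2 : M'%:R <= M%:R + G0%:R :> R by rewrite -natrD ler_nat.
    have l3 : (M'%:R - M%:R) * P <= G0%:R * P by apply: ler_wpM2r; [exact: P0|lra].
    have l4 : 0 <= (M'%:R - M%:R) * P by apply: mulr_ge0; [lra|exact: P0].
    move: hnum; rewrite !ler_norml => /andP[h1 h2]; apply/andP; split.
      have : (M'%:R - M%:R) * P = M'%:R * P - M%:R * P by ring.
      lra.
    have : (M'%:R - M%:R) * P = M'%:R * P - M%:R * P by ring.
    lra.
clear -P0 c0 hu_le hu_b E1 E3 hd_small hd_pos GE.
have Gfun : (fun r => (ln (fine (mu (dball A psi x r))) / ln r)%:E) = (fun r => (G r)%:E).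
  by apply/funext => r; rewrite GE.
have negd : forall t, - P / t = P / (- t) by move=> t; rewrite invrN mulrN mulNr.
have [LI1 LI2] := @liminf_props R u (L - C) 0 hu_b.
have [LS1 LS2] := @limsup_props R u (L - C) 0 hu_b.
have hl : limn_inf u <= - c.
  rewrite leNgt; apply/negP => h.
  have eta0 : 0 < (limn_inf u + c) / 2 by apply: divr_gt0; lra.
  have [N hN] := LI1 _ eta0.
  have := hN (maxn N 1) (leq_maxl _ _); have := hu_le (maxn N 1) (leq_maxr _ _); lra.
have hs : limn_sup u <= - c.
  rewrite leNgt; apply/negP => h.
  have eta0 : 0 < (limn_sup u + c) / 2 by apply: divr_gt0; lra.
  have [n n1 hn] := LS2 _ eta0 1%N.
  have := hu_le n n1; lra.
have e2 : forall e : R, 0 < e -> 0 < e / 2 by move=> e e0; apply: divr_gt0; lra.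
split.
- rewrite /lower_locdim Gfun negd; apply/eqP; rewrite eq_le; apply/andP; split.
  + apply/lee_addgt0Pr => e e0; apply: ge_ereal_sup => _ [del hdel <-].
    have del0 : 0 < del by move: hdel; rewrite /= in_itv /= andbT.
    have [eta eta0 heta] := @mono_eps R P c P0 c0 (e / 2) (e2 e e0).
    have [N3 hN3] := hd_small del del0.
    have [N4 hN4] := E3 (e / 2) (e2 e e0).
    have [M NM hM] := LI2 eta eta0 (maxn (maxn N3 N4) 1).
    have M1 : (0 < M)%N by clear -NM; lia.
    have M3 : (N3 <= M)%N by clear -NM; lia.
    have M4 : (N4 <= M)%N by clear -NM; lia.
    have hmem : [set (G r)%:E | r in `]0, del[] (G (d M))%:E.
      exists (d M) => //; rewrite /= in_itv /=; apply/andP; split; [exact: hd_pos|exact: hN3].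
    apply: le_trans (ereal_inf_lbound hmem) _; rewrite -EFinD lee_fin.
    have h1 := hN4 M M4.
    have h2 := heta (u M) (limn_inf u) (hu_le M M1) hl ltac:(lra).
    move: h1; rewrite ler_norml => /andP[h3 h4]; lra.
  + apply/lee_subgt0Pr => e e0.
    have [eta eta0 heta] := @mono_eps R P c P0 c0 (e / 2) (e2 e e0).
    have [N1 hN1] := LI1 eta eta0.
    have [del del0 hdel] := E1 (e / 2) (e2 e e0) (maxn N1 1).
    have hmem : [set ereal_inf [set (G r)%:E | r in `]0, d0[] | d0 in `]0, +oo[]
        (ereal_inf [set (G r)%:E | r in `]0, del[]).
      by exists del => //; rewrite /= in_itv /= andbT.
    apply: le_trans _ (ereal_sup_ubound hmem).
    apply: le_ereal_inf_tmp => _ [r hr <-].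
    move: hr; rewrite /= in_itv /= => /andP[r0 rd].
    have [M NM hM] := hdel r r0 rd.
    have M1 : (0 < M)%N by clear -NM; lia.
    have MN1 : (N1 <= M)%N by clear -NM; lia.
    rewrite -EFinB lee_fin.
    have h2 := heta (limn_inf u) (u M) hl (hu_le M M1) (hN1 M MN1).
    move: hM; rewrite ler_norml => /andP[h3 h4]; lra.
- rewrite /upper_locdim Gfun negd; apply/eqP; rewrite eq_le; apply/andP; split.
  + apply/lee_addgt0Pr => e e0.
    have [eta eta0 heta] := @mono_eps R P c P0 c0 (e / 2) (e2 e e0).
    have [N1 hN1] := LS1 eta eta0.
    have [del del0 hdel] := E1 (e / 2) (e2 e e0) (maxn N1 1).
    have hmem : [set ereal_sup [set (G r)%:E | r in `]0, d0[] | d0 in `]0, +oo[]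
        (ereal_sup [set (G r)%:E | r in `]0, del[]).
      by exists del => //; rewrite /= in_itv /= andbT.
    apply: le_trans (ereal_inf_lbound hmem) _.
    apply: ge_ereal_sup => _ [r hr <-].
    move: hr; rewrite /= in_itv /= => /andP[r0 rd].
    have [M NM hM] := hdel r r0 rd.
    have M1 : (0 < M)%N by clear -NM; lia.
    have MN1 : (N1 <= M)%N by clear -NM; lia.
    rewrite -EFinD lee_fin.
    have h2 := heta (u M) (limn_sup u) (hu_le M M1) hs ltac:(have := hN1 M MN1; lra).
    move: hM; rewrite ler_norml => /andP[h3 h4]; lra.
  + apply/lee_subgt0Pr => e e0; apply: le_ereal_inf_tmp => _ [del hdel <-].
    have del0 : 0 < del by move: hdel; rewrite /= in_itv /= andbT.
    have [eta eta0 heta] := @mono_eps R P c P0 c0 (e / 2) (e2 e e0).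
    have [N3 hN3] := hd_small del del0.
    have [N4 hN4] := E3 (e / 2) (e2 e e0).
    have [M NM hM] := LS2 eta eta0 (maxn (maxn N3 N4) 1).
    have M1 : (0 < M)%N by clear -NM; lia.
    have M3 : (N3 <= M)%N by clear -NM; lia.
    have M4 : (N4 <= M)%N by clear -NM; lia.
    have hmem : [set (G r)%:E | r in `]0, del[] (G (d M))%:E.
      exists (d M) => //; rewrite /= in_itv /=; apply/andP; split; [exact: hd_pos|exact: hN3].
    apply: le_trans _ (ereal_sup_ubound hmem); rewrite -EFinB lee_fin.
    have h1 := hN4 M M4.
    have h2 := heta (limn_sup u) (u M) hs (hu_le M M1) hM.
    move: h1; rewrite ler_norml => /andP[h3 h4]; lra.
Qed.
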